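(* Let $D=(V,A)$ be a digraph and $b\in\mathbb{Z}_{>0}^V$ such that $A$ can be partitioned into two $b$-branchings $B_1,B_2$. Let $b'_1,b'_2\in\mathbb{Z}_{\ge0}^V$ satisfy $b'_1+b'_2=d^-_A$, $b'_1\le b$ and $b'_2\le b$. Then $A$ can be partitioned into two $b$-branchings $B'_1,B'_2$ with $d^-_{B'_1}=b'_1$ and $d^-_{B'_2}=b'_2$ if and only if $b'_1(X)<b(X)$ and $b'_2(X)<b(X)$ for every source component $X$ of $D$.
   Context: $d^-_B\in\mathbb{Z}^V$ is the indegree vector of $(V,B)$; for a vector $c$ and $X\subseteq V$, $c(X)=\sum_{v\in X}c(v)$. An arc set $B\subseteq A$ is a $b$-branching if $d^-_B(v)\le b(v)$ for all $v\in V$ and $|B[X]|\le b(X)-1$ for every nonempty $X\subseteq V$, where $B[X]$ is the set of arcs of $B$ with both ends in $X$. A source component of $D$ is a strongly connected component $X$ of $D$ with no arc of $A$ entering $X$. *)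

(* Defs.v *)
From mathcomp Require Import all_boot.
Set Implicit Arguments. Unset Strict Implicit. Unset Printing Implicit Defensive.

(* A digraph D = (V, A): vertices form a finType V, arcs form a finType Arc
   (parallel arcs and loops allowed), with tail/head maps.  The arc set A
   is the whole of Arc. Arc subsets are {set Arc}. *)

Section Digraph.
Variables (V Arc : finType) (tail head : Arc -> V).

Definition indeg (B : {set Arc}) (v : V) : nat := #|[set a in B | head a == v]|.

Definition vsum (c : V -> nat) (X : {set V}) : nat := \sum_(v in X) c v.

Definition induced (B : {set Arc}) (X : {set V}) : {set Arc} :=
  [set a in B | (tail a \in X) && (head a \in X)].

Definition is_b_branching (b : V -> nat) (B : {set Arc}) : Prop :=
  (forall v, indeg B v <= b v) /\
  (forall X : {set V}, X != set0 -> #|induced B X| < vsum b X  (* i.e. |B[X]| <= b(X) - 1 over Z *)).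

Definition adj : rel V := fun u v => [exists a : Arc, (tail a == u) && (head a == v)].

Definition is_scc (X : {set V}) : Prop :=
  exists2 u, u \in X & X = [set v | connect adj u v && connect adj v u].

Definition is_source_component (X : {set V}) : Prop :=
  is_scc X /\ (forall a : Arc, head a \in X -> tail a \in X).

End Digraph.

(* Main.v *)
Require Import Defs.
From mathcomp Require Import all_boot.
From mathcomp Require Import zify.
Set Implicit Arguments. Unset Strict Implicit. Unset Printing Implicit Defensive.

Section Aux.
Variables (V Arc : finType) (tail head : Arc -> V).

Definition ent (E : {set Arc}) (X : {set V}) : nat :=
  \sum_(b : Arc) ((b \in E) && (tail b \notin X) && (head b \in X)).

Definition qq (U X : {set V}) : nat := (X \subset U).

Definition Inv (U : {set V}) (E : {set Arc}) (S : {set V}) : Prop :=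
  forall X : {set V}, X != set0 -> qq U X + (X :&: S == set0) <= ent E X.

Lemma ent_ge (E : {set Arc}) (X : {set V}) a : a \in E -> tail a \notin X -> head a \in X ->
  0 < ent E X.
Proof.
move=> aE ta ha; rewrite /ent (bigD1 a) //= aE ta ha.
by [].
Qed.

Lemma ent_pos (E : {set Arc}) (X : {set V}) : 0 < ent E X ->
  exists a, [/\ a \in E, tail a \notin X & head a \in X].
Proof.
move=> h; case: (boolP [exists a, (a \in E) && (tail a \notin X) && (head a \in X)]).
  by move=> /existsP[a /andP[/andP[? ?] ?]]; exists a.
move=> /existsPn H; move: h; rewrite /ent big1 // => a _.
by move: (H a); case: (_ && _ && _).
Qed.

Lemma ent_mono (E F : {set Arc}) (X : {set V}) : E \subset F -> ent E X <= ent F X.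
Proof.
move=> /subsetP sEF; rewrite /ent; apply: leq_sum => a _.
by case aE: (a \in E); rewrite ?(sEF _ aE).
Qed.

Lemma ent_sub (E F : {set Arc}) (X : {set V}) : ent E X <= ent F X + ent (E :\: F) X.
Proof.
rewrite /ent -big_split /=; apply: leq_sum => a _; rewrite inE.
by case: (a \in E); case: (a \in F); case: (tail a \notin X); case: (head a \in X).
Qed.

Lemma ent_submod (E : {set Arc}) (X Y : {set V}) :
  ent E (X :|: Y) + ent E (X :&: Y) <= ent E X + ent E Y.
Proof.
rewrite /ent -!big_split /=; apply: leq_sum => a _; rewrite !inE.
by case: (a \in E); case: (tail a \in X); case: (tail a \in Y);
  case: (head a \in X); case: (head a \in Y).
Qed.

Lemma ent_D1 (E : {set Arc}) a (X : {set V}) :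
  ent E X = ent (E :\ a) X + ((a \in E) && (tail a \notin X) && (head a \in X)).
Proof.
rewrite /ent (bigD1 a) //= addnC; congr (_ + _).
rewrite [LHS]big_mkcond; apply: eq_bigr => b _; rewrite !inE; by case: (b == a).
Qed.

Lemma qq_super (U X Y : {set V}) : qq U X + qq U Y <= qq U (X :|: Y) + qq U (X :&: Y).
Proof.
rewrite /qq subUset.
case hX: (X \subset U); case hY: (Y \subset U) => //=.
- by rewrite (subset_trans (subsetIl X Y) hX).
- by rewrite (subset_trans (subsetIl X Y) hX).
- by rewrite (subset_trans (subsetIr X Y) hY).
Qed.


Lemma arith1 (e1 e2 q1 q2 qx qy k : nat) : q1 <= e1 -> q2 + k <= e2 ->
  e1 + e2 <= qx + qy -> qx + qy <= q1 + q2 -> k = 0 /\ e2 = q2.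
Proof. lia. Qed.

Lemma sum_pos (f : Arc -> bool) : 0 < \sum_(b : Arc) f b -> exists b, f b.
Proof.
move=> h; case: (boolP [exists b, f b]); first by move=> /existsP.
move=> /existsPn H; move: h; rewrite big1 // => a _.
by rewrite (negPf (H a)).
Qed.

Lemma step (U : {set V}) (E : {set Arc}) (S : {set V}) : Inv U E S -> S != setT ->
  exists a, [/\ a \in E, tail a \in S, head a \notin S & Inv U (E :\ a) (head a |: S)].
Proof.
move=> hI hS.
have [v0 v0S] : exists v0, v0 \notin S.
  case: (boolP [exists v, v \notin S]); first by move=> /existsP.
  move=> /existsPn H; case/eqP: hS; apply/setP => w; rewrite inE.
  by move: (H w); rewrite negbK.
have T0 : ent E setT = 0.
  by rewrite /ent big1 // => a _; rewrite in_setT /= andbF.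
have Tn0 : [set: V] != set0 by apply/set0Pn; exists v0.
have := hI _ Tn0; rewrite T0 setTI leqn0 addn_eq0 => /andP[/eqP qT Snz0].
have Snz : S != set0 by move: Snz0; case: (S == set0).
pose P := fun X : {set V} => [&& X :&: S != set0, ~~ (X \subset S) & ent E X == qq U X].
have PT : P setT by rewrite /P setTI Snz subTset hS T0 qT.
case: (minset_exists PT) => X /minsetP [PX minX] _.
case/and3P: PX => XS XnS /eqP tX.
set Z := X :\: S.
have Zn0 : Z != set0 by rewrite /Z setD_eq0.
have ZS : (Z :&: S == set0).
  apply/eqP/setP => w; rewrite !inE; by case: (w \in S); rewrite ?andbF.
have := hI _ Zn0; rewrite ZS => hZ.
have qXZ : qq U X <= qq U Z.
  rewrite /qq; case hXU: (X \subset U) => //=.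
  by rewrite (subset_trans (subsetDl X S) hXU).
have cnt : ent E Z <= ent E X +
   \sum_(b : Arc) ((b \in E) && (tail b \in X :&: S) && (head b \in Z)).
  rewrite /ent -big_split /=; apply: leq_sum => a _; rewrite /Z !inE.
  by case: (a \in E); case: (tail a \in X); case: (tail a \in S);
    case: (head a \in X); case: (head a \in S).
have : 0 < \sum_(b : Arc) ((b \in E) && (tail b \in X :&: S) && (head b \in Z)).
  rewrite lt0n; apply/negP => /eqP h0; move: cnt hZ; rewrite h0 addn0 tX.
  move=> h1 h2; have := leq_trans h2 h1; rewrite addn1 ltnNge.
  by rewrite qXZ.
case/sum_pos => a /andP[/andP[aE]]; rewrite /Z !inE => /andP[taX taS] /andP[haS haX].
exists a; split => //.
move=> Y Yn0; have eD := ent_D1 E a Y; rewrite aE /= in eD.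
case hc: ((tail a \notin Y) && (head a \in Y)); rewrite hc /= in eD.
- case/andP: hc => taY haY.
  have -> : (Y :&: (head a |: S) == set0) = false.
    apply/negbTE/set0Pn; exists (head a); by rewrite !inE eqxx haY.
  rewrite addn0.
  suff : qq U Y < ent E Y by rewrite eD addn1 ltnS.
  have hY := hI _ Yn0.
  rewrite ltnNge; apply/negP => hle.
  have YS : (Y :&: S == set0) = false.
    apply/negbTE/negP => e; move: hY; rewrite e addn1 => hY.
    by have := leq_trans hY hle; rewrite ltnn.
  move: hY; rewrite YS addn0 => hY.
  have eY : ent E Y = qq U Y by apply/eqP; rewrite eqn_leq hle hY.
  have XYn0 : X :&: Y != set0 by apply/set0Pn; exists (head a); rewrite inE haX.
  have XUYn0 : X :|: Y != set0.
    by apply/set0Pn; exists (head a); rewrite inE haX.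
  have h1 := hI _ XUYn0; have h2 := hI _ XYn0.
  have h3 := ent_submod E X Y; have h4 := qq_super U X Y.
  rewrite tX eY in h3.
  have [k0 eXY] := arith1 (leq_trans (leq_addr _ _) h1) h2 h3 h4.
  have XYS : (X :&: Y :&: S == set0) = false by move: k0; case: (_ == _).
  have PXY : P (X :&: Y).
    rewrite /P XYS eXY eqxx andbT /=; apply/subsetPn; exists (head a) => //.
    by rewrite inE haX.
  have eq := minX _ PXY (subsetIl X Y).
  by move: taY; rewrite -eq in taX; rewrite inE in taX; case/andP: taX => _ ->.
- rewrite addn0 in eD; rewrite -eD; apply: leq_trans (hI _ Yn0); rewrite leq_add2l.
  case e: (Y :&: (head a |: S) == set0) => //=.
  suff -> : (Y :&: S == set0) by [].
  rewrite -subset0 -(eqP e); apply: setIS; exact: subsetUr.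
Qed.

Lemma grow (U : {set V}) : forall n (E : {set Arc}) (S : {set V}), #|~: S| <= n -> Inv U E S ->
 exists F : {set Arc}, [/\ F \subset E, {in F &, injective head},
   (forall a, a \in F -> head a \notin S),
   (forall X : {set V}, X != set0 -> X \subset ~: S -> 0 < ent F X) & Inv U (E :\: F) setT].
Proof.
have base : forall (E : {set Arc}) (S : {set V}), S = setT -> Inv U E S ->
 exists F : {set Arc}, [/\ F \subset E, {in F &, injective head},
   (forall a, a \in F -> head a \notin S),
   (forall X : {set V}, X != set0 -> X \subset ~: S -> 0 < ent F X) & Inv U (E :\: F) setT].
  move=> E S -> hI; exists set0; split.
  - exact: sub0set.
  - by move=> x y; rewrite in_set0.
  - by move=> a; rewrite in_set0.
  - by move=> X Xn0; rewrite setCT subset0 (negPf Xn0).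
  - by rewrite setD0.
elim=> [|n IH] E S hn hI.
  apply: base hI; move: hn; rewrite leqn0 cards_eq0 => /eqP h.
  by rewrite -[S]setCK h setC0.
case: (eqVneq S setT) => [hS|hS]; first exact: base hI.
have [a [aE taS haS hI']] := step hI hS.
have hn' : #|~: (head a |: S)| <= n.
  have e : ~: (head a |: S) = (~: S) :\ head a.
    by apply/setP => w; rewrite !inE negb_or.
  rewrite e -ltnS; apply: leq_trans hn; apply: proper_card; apply: properD1.
  by rewrite inE.
have [F' [sF' injF' hF' entF' IF']] := IH _ _ hn' hI'.
exists (a |: F'); split.
- apply/subsetP => x /setU1P[->|/(subsetP sF')] //.
  by rewrite inE => /andP[_ ->].
- move=> x y /setU1P[->|xF] /setU1P[->|yF] h //.
  + by have := hF' _ yF; rewrite !inE -h eqxx.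
  + by have := hF' _ xF; rewrite !inE h eqxx.
  + exact: injF'.
- move=> x /setU1P[->|xF] //.
  by have := hF' _ xF; rewrite inE negb_or => /andP[_].
- move=> X Xn0 XS.
  case haX: (head a \in X).
    apply: (ent_ge (a := a)) => //; first by rewrite !inE eqxx.
    apply/negP => tX; have := subsetP XS _ tX; by rewrite inE taS.
  have XS' : X \subset ~: (head a |: S).
    apply/subsetP => w wX; rewrite !inE negb_or.
    have := subsetP XS _ wX; rewrite inE => ->; rewrite andbT.
    by apply/negP => /eqP e; rewrite -e wX in haX.
  apply: leq_trans (entF' _ Xn0 XS') _; apply: ent_mono; exact: subsetUr.
- have -> : E :\: (a |: F') = (E :\ a) :\: F'.
    by apply/setP => x; rewrite !inE negb_or; case: (x == a); case: (x \in F').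
  exact: IF'.
Qed.

Lemma card_sumb (T : finType) (A : {set T}) : #|A| = \sum_(x : T) (x \in A).
Proof.
rewrite -sum1_card big_mkcond; apply: eq_bigr => x _; by case: (x \in A).
Qed.

Lemma indeg_sum (B : {set Arc}) v :
  indeg head B v = \sum_(a : Arc) ((a \in B) && (head a == v)).
Proof. rewrite /indeg card_sumb; apply: eq_bigr => a _; by rewrite inE. Qed.

Lemma headsum (B : {set Arc}) (X : {set V}) :
  \sum_(v in X) indeg head B v = \sum_(a : Arc) ((a \in B) && (head a \in X)).
Proof.
rewrite (eq_bigr _ (fun v _ => indeg_sum B v)) exchange_big; apply: eq_bigr => a _.
case aB: (a \in B) => /=; last by rewrite big1.
case hX: (head a \in X).
  rewrite (bigD1 (head a)) //= eqxx big1 // => v /andP[_ nv].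
  by rewrite eq_sym (negPf nv).
rewrite big1 // => v vX; case: eqP => // e; by rewrite -e hX in vX.
Qed.

Lemma count_split (B : {set Arc}) (X : {set V}) :
  \sum_(v in X) indeg head B v = #|induced tail head B X| + ent B X.
Proof.
rewrite headsum card_sumb /ent -big_split; apply: eq_bigr => a _; rewrite inE.
by case: (a \in B); case: (tail a \in X); case: (head a \in X).
Qed.

Lemma indeg_split (B : {set Arc}) v :
  indeg head setT v = indeg head B v + indeg head (~: B) v.
Proof.
rewrite !indeg_sum -big_split; apply: eq_bigr => a _; rewrite !inE.
by case: (a \in B); case: (head a == v).
Qed.

Lemma closed_anc (X : {set V}) u x : (forall a, head a \in X -> tail a \in X) ->
  x \in X -> connect (adj tail head) u x -> u \in X.
Proof.
move=> hX xX /connectP[p]; elim: p u => [|w p IHp] u /=; first by move=> _ <-.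
move=> /andP[auw pw] ex; have wX := IHp w pw ex.
case/existsP: auw => a /andP[/eqP ta /eqP ha].
by rewrite -ta hX // ha.
Qed.

Lemma source_exists (X : {set V}) : X != set0 ->
  (forall a, head a \in X -> tail a \in X) ->
  exists Y, is_source_component tail head Y /\ Y \subset X.
Proof.
move=> /set0Pn[x0 x0X] hX.
pose anc y := [set u | connect (adj tail head) u y].
case: (arg_minnP (fun y => #|anc y|) x0X) => x xX xmin.
exists [set v | connect (adj tail head) x v && connect (adj tail head) v x];
  split; [split|].
- by exists x; rewrite // inE connect0.
- move=> a; rewrite !inE => /andP[xh hx].
  have aa : adj tail head (tail a) (head a) by apply/existsP; exists a; rewrite !eqxx.
  have tx : connect (adj tail head) (tail a) x := connect_trans (connect1 aa) hx.
  have tX : tail a \in X := closed_anc hX xX tx.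
  have sub : anc (tail a) \subset anc x.
    apply/subsetP => u; rewrite !inE => ut; exact: connect_trans ut tx.
  have eq : anc (tail a) = anc x by apply/eqP; rewrite eqEcard sub xmin.
  have : x \in anc (tail a) by rewrite eq inE connect0.
  by rewrite inE => xt; rewrite xt tx.
- apply/subsetP => v; rewrite inE => /andP[_ vx]; exact: closed_anc hX xX vx.
Qed.

Lemma vsum_lt (c d : V -> nat) (X : {set V}) v : (forall w, c w <= d w) ->
  v \in X -> c v < d v -> vsum c X < vsum d X.
Proof.
move=> hcd vX hv; rewrite /vsum (bigD1 v) //= [X in _ < X](bigD1 v) //=.
by rewrite -addSn leq_add // leq_sum.
Qed.

Lemma mk_branching (b c : V -> nat) (B F : {set Arc}) :
  (forall v, indeg head B v = c v) -> (forall v, c v <= b v) -> F \subset B ->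
  (forall X, X != set0 -> X \subset [set v | c v == b v] -> 0 < ent F X) ->
  is_b_branching tail head b B.
Proof.
move=> hind hcb sFB hF; split; first by move=> v; rewrite hind.
move=> X Xn0; have := count_split B X.
rewrite (eq_bigr _ (fun v _ => hind v)) => e.
have le : vsum c X <= vsum b X by apply: leq_sum.
case: (boolP (X \subset [set v | c v == b v])) => hX.
  have h1 := hF X Xn0 hX; have h2 := ent_mono X sFB.
  move: e le h1 h2; rewrite /vsum; lia.
case/subsetPn: hX => v vX; rewrite inE => nv.
have lt : c v < b v by rewrite ltn_neqAle nv hcb.
have := vsum_lt hcb vX lt; move: e; rewrite /vsum; lia.
Qed.

End Aux.

Lemma exists_sub (T : finType) (G : {set T}) n : n <= #|G| ->
  exists B : {set T}, B \subset G /\ #|B| = n.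
Proof.
elim: n => [|n IH] h; first by exists (set0 : {set T}); rewrite sub0set cards0.
have [B [sBG cB]] := IH (ltnW h).
have : B \proper G by rewrite properEcard sBG cB.
case/properP => _ [x xG xB]; exists (x |: B); split.
  by apply/subsetP => y /setU1P[->|/(subsetP sBG)].
by rewrite cardsU1 xB cB.
Qed.

Lemma pick_between (T : finType) (F G : {set T}) k : F \subset G -> #|F| <= k ->
  k <= #|G| -> exists B : {set T}, [/\ F \subset B, B \subset G & #|B| = k].
Proof.
move=> sFG h1 h2.
have : k - #|F| <= #|G :\: F| by rewrite cardsD (setIidPr sFG); apply: leq_sub2r.
case/exists_sub => B' [sB' cB']; exists (F :|: B'); split.
- exact: subsetUl.
- by rewrite subUset sFG (subset_trans sB') // subsetDl.
- rewrite cardsU; have -> : F :&: B' = set0.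
    apply/setP => x; rewrite !inE; apply/negP => /andP[xF xB].
    by have := subsetP sB' _ xB; rewrite inE xF.
  by rewrite cB' cards0 subn0; lia.
Qed.


Lemma arith2 (t s n i1 i2 e : nat) : t = s + s -> n = i1 + i2 -> i1 < s -> i2 < s ->
  t = n + e -> 2 <= e.
Proof. lia. Qed.

Theorem mainTheorem9 (V Arc : finType) (tail head : Arc -> V) (b : V -> nat)
  (hb : forall v, 0 < b v)
  (hpart : exists B1 B2 : {set Arc},
      [/\ B1 :|: B2 = [set: Arc], [disjoint B1 & B2],
          is_b_branching tail head b B1 & is_b_branching tail head b B2])
  (b1 b2 : V -> nat)
  (hsum : forall v, b1 v + b2 v = indeg head [set: Arc] v)
  (hle1 : forall v, b1 v <= b v) (hle2 : forall v, b2 v <= b v) :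
  (exists B1 B2 : {set Arc},
      [/\ B1 :|: B2 = [set: Arc], [disjoint B1 & B2],
          is_b_branching tail head b B1, is_b_branching tail head b B2 &
          (forall v, indeg head B1 v = b1 v) /\ (forall v, indeg head B2 v = b2 v)])
  <->
  (forall X : {set V}, is_source_component tail head X ->
      vsum b1 X < vsum b X /\ vsum b2 X < vsum b X).
Proof.
split.
  move=> [B1 [B2 [_ _ [_ hB1] [_ hB2] [d1 d2]]]] X [[u uX _] hsrc].
  have Xn0 : X != set0 by apply/set0Pn; exists u.
  have e0 : forall B, ent tail head B X = 0.
    move=> B; rewrite /ent big1 // => a _.
    by case hX: (head a \in X); rewrite ?andbF // (hsrc _ hX) andbF.
  have c1 := count_split tail head B1 X; have c2 := count_split tail head B2 X.
  rewrite e0 addn0 (eq_bigr _ (fun v _ => d1 v)) in c1.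
  rewrite e0 addn0 (eq_bigr _ (fun v _ => d2 v)) in c2.
  by rewrite /vsum c1 c2; split; [apply: hB1 | apply: hB2].
move=> hsrc.
set T1 := [set v | b1 v == b v]; set T2 := [set v | b2 v == b v].
have noent : forall (c : V -> nat) (X : {set V}), X != set0 ->
    (forall v, v \in X -> c v = b v) ->
    (forall Y, is_source_component tail head Y -> vsum c Y < vsum b Y) ->
    0 < ent tail head setT X.
  move=> c X Xn0 hc hY; rewrite lt0n; apply/negP => /eqP h0.
  have cl : forall a, head a \in X -> tail a \in X.
    move=> a ha; apply/negPn/negP => ta.
    by have := ent_ge (E := setT) (in_setT a) ta ha; rewrite h0.
  have [Y [sY sYX]] := source_exists Xn0 cl.
  have := hY _ sY; rewrite /vsum (eq_bigr _ (fun v vY => hc v (subsetP sYX v vY))).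
  by rewrite ltnn.
have C : Inv tail head T2 setT (~: T1).
  move=> X Xn0; rewrite -setDE setD_eq0 /qq.
  case h1: (X \subset T1); case h2: (X \subset T2) => /=.
  - case: hpart => B1 [B2 [hU hD [_ hB1] [_ hB2]]].
    have e1 := hB1 X Xn0; have e2 := hB2 X Xn0.
    have ind : #|induced tail head setT X| =
               #|induced tail head B1 X| + #|induced tail head B2 X|.
      rewrite (card_sumb (induced tail head setT X)) (card_sumb (induced tail head B1 X)).
      rewrite (card_sumb (induced tail head B2 X)) -big_split; apply: eq_bigr => a _; rewrite !inE.
      have : a \in B1 :|: B2 by rewrite hU.
      have : a \notin B1 :&: B2 by rewrite (disjoint_setI0 hD) inE.
      rewrite !inE; by case: (a \in B1); case: (a \in B2); case: (tail a \in X); case: (head a \in X).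
    have tot : \sum_(v in X) indeg head setT v = vsum b X + vsum b X.
      rewrite /vsum -big_split; apply: eq_bigr => v vX; rewrite -hsum.
      have := subsetP h1 v vX; have := subsetP h2 v vX; rewrite !inE.
      by move=> /eqP -> /eqP ->.
    exact: arith2 tot ind e1 e2 (count_split tail head setT X).
  - by rewrite ?addn0; apply: (noent b1) => // [v vX|]; [apply/eqP; have := subsetP h1 v vX; rewrite inE | move=> Y /hsrc []].
  - by rewrite ?addn0; apply: (noent b2) => // [v vX|]; [apply/eqP; have := subsetP h2 v vX; rewrite inE | move=> Y /hsrc []].
  - by [].
have [F1 [_ inj1 hd1 en1 I1]] := grow (U := T2) (leqnn _) C.
have C2 : Inv tail head set0 (setT :\: F1) (~: T2).
  move=> X Xn0; have := I1 X Xn0.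
  rewrite /qq setIT (negPf Xn0) subset0 (negPf Xn0) -setDE setD_eq0.
  by rewrite addn0 add0n.
have [F2 [sF2 inj2 hd2 en2 _]] := grow (U := set0) (leqnn _) C2.
have disj : forall a, a \in F2 -> a \notin F1.
  by move=> a /(subsetP sF2); rewrite inE => /andP[].
have sel : forall v, exists Bv : {set Arc},
    [/\ [set a in F1 | head a == v] \subset Bv,
        Bv \subset [set a | head a == v] :\: F2 & #|Bv| = b1 v].
  move=> v; apply: pick_between.
  - apply/subsetP => a; rewrite !inE => /andP[aF ->]; rewrite andbT.
    by apply/negP => aF2; have := disj _ aF2; rewrite aF.
  - case: (boolP ([set a in F1 | head a == v] == set0)) => [/eqP->|/set0Pn[a]].
      by rewrite cards0.
    rewrite inE => /andP[aF /eqP hv].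
    have vT : b1 v = b v.
      by have := hd1 a aF; rewrite !inE negbK hv => /eqP.
    have c1 : #|[set a in F1 | head a == v]| <= 1.
      apply/card_le1_eqP => x y; rewrite !inE => /andP[xF /eqP hx] /andP[yF /eqP hy].
      by apply: inj1 => //; rewrite hx hy.
    by apply: leq_trans c1 _; rewrite vT hb.
  - rewrite cardsD.
    have -> : #|[set a | head a == v]| = indeg head setT v.
      by rewrite /indeg; apply: eq_card => a; rewrite !inE.
    rewrite -hsum.
    suff : #|[set a | head a == v] :&: F2| <= b2 v by lia.
    case: (boolP ([set a | head a == v] :&: F2 == set0)) => [/eqP->|/set0Pn[a]].
      by rewrite cards0.
    rewrite !inE => /andP[/eqP hv aF].
    have vT : b2 v = b v.
      by have := hd2 a aF; rewrite !inE negbK hv => /eqP.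
    have c1 : #|[set a | head a == v] :&: F2| <= 1.
      apply/card_le1_eqP => x y; rewrite !inE => /andP[/eqP hx xF] /andP[/eqP hy yF].
      by apply: inj2 => //; rewrite hx hy.
    by apply: leq_trans c1 _; rewrite vT hb.
have [Bf hBf] := fin_all_exists sel.
set B1 := [set a | a \in Bf (head a)].
have d1 : forall v, indeg head B1 v = b1 v.
  move=> v; case: (hBf v) => _ sB cB; rewrite -cB /indeg; apply: eq_card => a.
  rewrite !inE.
  apply/andP/idP => [[aB /eqP <-] // | aB].
  have := subsetP sB _ aB; rewrite !inE => /andP[_ /eqP hv].
  by rewrite hv aB.
have d2 : forall v, indeg head (~: B1) v = b2 v.
  move=> v; have := indeg_split head B1 v; rewrite -hsum d1 => /addnI.
  by move=> ->.
exists B1, (~: B1); split.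
- exact: setUCr.
- by rewrite disjoints_subset setCK.
- apply: (mk_branching (c := b1) (F := F1)) => //.
    apply/subsetP => a aF; rewrite inE; case: (hBf (head a)) => sF _ _.
    by apply: (subsetP sF); rewrite inE aF eqxx.
  by move=> X Xn0 XT; apply: en1 => //; rewrite setCK.
- apply: (mk_branching (c := b2) (F := F2)) => //.
    apply/subsetP => a aF; rewrite !inE; case: (hBf (head a)) => _ sB _.
    by apply/negP => aB; have := subsetP sB _ aB; rewrite !inE aF.
  by move=> X Xn0 XT; apply: en2 => //; rewrite setCK.
- by split.
Qed.
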